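(* Let $L=E\cup F\Sigma^*$, where $E,F\subseteq\Sigma^*$ are finite, be a reverse definite language with state complexity $n\ge 1$. Then $\sigma(L)\le (n-1)!$, and this bound is tight (for every $n\ge1$ there is a reverse definite language with state complexity $n$ and syntactic complexity $(n-1)!$). Moreover, if $L$ achieves this upper bound, i.e. $\sigma(L)=(n-1)!$, and $n\ge 4$, then $|\Sigma|\ge (n-1)!-2(n-2)!$, and this bound is tight (for every $n\ge 4$ there is a reverse definite language over an alphabet of size exactly $(n-1)!-2(n-2)!$ with state complexity $n$ and syntactic complexity $(n-1)!$).
   Context: $\Sigma$ is a finite non-empty alphabet. A language $L\subseteq\Sigma^*$ is reverse definite if $L=E\cup F\Sigma^*$ for some finite languages $E,F\subseteq\Sigma^*$. The state complexity of a regular language is the number of states of its minimal deterministic finite automaton (DFA). The syntactic congruence of $L$ is $x\approx_L y$ iff for all $u,v\in\Sigma^*$, $uxv\in L\Leftrightarrow uyv\in L$; the syntactic semigroup is $\Sigma^+/\approx_L$, and the syntactic complexity $\sigma(L)$ is its cardinality (equivalently, the number of distinct transformations of the states of the minimal DFA of $L$ induced by non-empty words). *)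

(* Defs.v *)
From mathcomp Require Import all_boot.
Set Implicit Arguments. Unset Strict Implicit. Unset Printing Implicit Defensive.

Definition lang (S : finType) := seq S -> bool.

Definition reverse_definite (S : finType) (L : lang S) : Prop :=
  exists (E F : seq (seq S)),
    forall w, L w = (w \in E) || has (fun f => prefix f w) F.

Definition nerode (S : finType) (L : lang S) (x y : seq S) : Prop :=
  forall w, L (x ++ w) = L (y ++ w).

(* State complexity of L is n: the Nerode relation has exactly n classes
   (= number of states of the minimal complete DFA of L). *)
Definition state_complexity (S : finType) (L : lang S) (n : nat) : Prop :=
  exists q : seq S -> 'I_n,
    (forall x y, q x = q y <-> nerode L x y) /\
    (forall i : 'I_n, exists x, q x = i).

Definition syntactic_eq (S : finType) (L : lang S) (x y : seq S) : Prop :=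
  forall u v, L (u ++ x ++ v) = L (u ++ y ++ v).

(* Syntactic complexity of L is m: the syntactic semigroup
   (non-empty words modulo the syntactic congruence) has exactly m elements. *)
Definition syntactic_complexity (S : finType) (L : lang S) (m : nat) : Prop :=
  exists s : seq S -> 'I_m,
    (forall x y, x != [::] -> y != [::] -> (s x = s y <-> syntactic_eq L x y)) /\
    (forall i : 'I_m, exists x, x != [::] /\ s x = i).

(* Main.v *)
Require Import Defs.
From mathcomp Require Import all_boot zify.
From Stdlib Require Import ClassicalEpsilon.
Set Implicit Arguments. Unset Strict Implicit. Unset Printing Implicit Defensive.


Definition pb (P : Prop) : bool :=
  if excluded_middle_informative P then true else false.
Lemma pbP P : reflect P (pb P).
Proof. rewrite /pb; case: excluded_middle_informative => h; constructor; done. Qed.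

Lemma card_familyP (T : finType) (rT : finType) (F : T -> pred rT) :
  #|family F| = \prod_(x : T) #|F x|.
Proof. by rewrite card_family foldrE big_map big_enum. Qed.

Definition tr (S : finType) n (q : seq S -> 'I_n) (rep : 'I_n -> seq S) (x : seq S)
  : {ffun 'I_n -> 'I_n} := [ffun i => q (rep i ++ x)].

Lemma rcong (S : finType) (L : lang S) n (q : seq S -> 'I_n) :
  (forall x y, q x = q y <-> nerode L x y) ->
  forall x y z, q x = q y -> q (x ++ z) = q (y ++ z).
Proof.
move=> qN x y z /qN H; apply/qN => w; by rewrite -!catA H.
Qed.

Lemma trE (S : finType) (L : lang S) n (q : seq S -> 'I_n) rep :
  (forall x y, q x = q y <-> nerode L x y) -> (forall i, q (rep i) = i) ->
  forall u x, q (u ++ x) = tr q rep x (q u).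
Proof. move=> qN repK u x; rewrite ffunE; apply: (rcong qN); by rewrite repK. Qed.

Lemma tr_cat (S : finType) (L : lang S) n (q : seq S -> 'I_n) rep :
  (forall x y, q x = q y <-> nerode L x y) -> (forall i, q (rep i) = i) ->
  forall x y i, tr q rep (x ++ y) i = tr q rep y (tr q rep x i).
Proof.
move=> qN repK x y i.
by rewrite [tr _ _ x i]ffunE -(trE qN repK) ffunE catA.
Qed.

Lemma syn_tr (S : finType) (L : lang S) n (q : seq S -> 'I_n) rep :
  (forall x y, q x = q y <-> nerode L x y) -> (forall i, q (rep i) = i) ->
  forall x y, syntactic_eq L x y <-> tr q rep x = tr q rep y.
Proof.
move=> qN repK x y; split.
  move=> H; apply/ffunP => i; rewrite !ffunE; apply/qN => w; by rewrite -!catA H.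
move=> H u v.
have: q (u ++ x) = q (u ++ y) by rewrite !(trE qN repK) H.
by move/qN/(_ v); rewrite -!catA.
Qed.

Definition Tset (S : finType) n (q : seq S -> 'I_n) rep : {set {ffun 'I_n -> 'I_n}} :=
  [set t | pb (exists x, x != [::] /\ tr q rep x = t)].

Lemma G1 (S : finType) (L : lang S) n (q : seq S -> 'I_n) rep :
  (forall x y, q x = q y <-> nerode L x y) -> (forall i, q (rep i) = i) ->
  0 < #|S| -> syntactic_complexity L #|Tset q rep|.
Proof.
move=> qN repK /card_gt0P [a _].
have inT x : x != [::] -> tr q rep x \in Tset q rep.
  by move=> hx; rewrite inE; apply/pbP; exists x.
have Ha := inT [:: a] isT.
exists (fun x => enum_rank_in Ha (tr q rep x)); split.
  move=> x y hx hy; rewrite (syn_tr qN repK); split; last by move->.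
  by apply: enum_rank_in_inj; apply: inT.
move=> i; have := enum_valP i; rewrite inE => /pbP [x [hx ex]].
by exists x; split => //; rewrite ex enum_valK_in.
Qed.

Lemma sc_uniq (S : finType) (L : lang S) m m' :
  syntactic_complexity L m -> syntactic_complexity L m' -> m <= m'.
Proof.
move=> [s [sP sS]] [s' [s'P s'S]].
have ch : forall i : 'I_m, exists x, (x != [::]) && (s x == i).
  by move=> i; have [x [h1 h2]] := sS i; exists x; rewrite h1 h2 eqxx.
pose f i := s' (xchoose (ch i)).
have finj : injective f.
  move=> i j; rewrite /f => e.
  have /andP [hi /eqP ei] := xchooseP (ch i).
  have /andP [hj /eqP ej] := xchooseP (ch j).
  by rewrite -ei -ej; apply/sP => //; apply/s'P.
by have := leq_card f finj; rewrite !card_ord.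
Qed.

Lemma long_const (S : finType) (L : lang S) :
  reverse_definite L -> exists K, forall x, K <= size x -> forall w, L (x ++ w) = L x.
Proof.
move=> [E [F HL]].
exists (\max_(s <- E ++ F) size s).+1 => x hx w.
have small s : s \in E ++ F -> size s < size x.
  move=> hs; apply: leq_ltn_trans hx; exact: leq_bigmax_seq.
have notE y : size x <= size y -> (y \in E) = false.
  move=> hy; apply/negP => hE.
  have := small y; rewrite mem_cat hE /= => /(_ isT).
  by rewrite ltnNge hy.
rewrite !HL notE ?size_cat ?leq_addr // notE //=.
apply: eq_in_has => f hf.
have hs : size f <= size x by apply: ltnW; apply: small; rewrite mem_cat hf orbT.
rewrite !prefixE take_cat.
case: ltnP => h; first by [].
have -> : size f = size x by apply/eqP; rewrite eqn_leq hs h.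
by rewrite subnn take0 cats0 take_size.
Qed.

Definition cst (S : finType) n (q : seq S -> 'I_n) rep (i : 'I_n) :=
  pb (forall w, tr q rep w i = i).
Definition Cset (S : finType) n (q : seq S -> 'I_n) rep (i : 'I_n) : {set 'I_n} :=
  [set j | pb (exists x, x != [::] /\ tr q rep x i = j) && (j != i)].

Lemma tr_nil (S : finType) (L : lang S) n (q : seq S -> 'I_n) rep :
  (forall x y, q x = q y <-> nerode L x y) -> (forall i, q (rep i) = i) ->
  forall i, tr q rep [::] i = i.
Proof. by move=> qN repK i; rewrite ffunE cats0 repK. Qed.

Lemma tr_long (S : finType) (L : lang S) n (q : seq S -> 'I_n) rep K :
  (forall x y, q x = q y <-> nerode L x y) -> (forall i, q (rep i) = i) ->
  (forall x, K <= size x -> forall w, L (x ++ w) = L x) ->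
  forall x i, K <= size x -> cst q rep (tr q rep x i).
Proof.
move=> qN repK hK x i hx; apply/pbP => w.
rewrite -(tr_cat qN repK) !ffunE; apply/qN => v.
have hl : K <= size (rep i ++ x) by rewrite size_cat (leq_trans hx) ?leq_addl.
by rewrite -!catA (catA (rep i) x) (hK _ hl) (catA (rep i) x v) (hK _ hl).
Qed.

Lemma cyc (S : finType) (L : lang S) n (q : seq S -> 'I_n) rep K :
  (forall x y, q x = q y <-> nerode L x y) -> (forall i, q (rep i) = i) ->
  (forall x, K <= size x -> forall w, L (x ++ w) = L x) ->
  forall x i, x != [::] -> tr q rep x i = i -> cst q rep i.
Proof.
move=> qN repK hK x i hx e.
have it k : tr q rep (flatten (nseq k x)) i = i.
  elim: k => [|k IH] /=; first exact: (tr_nil qN repK).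
  by rewrite (tr_cat qN repK) e IH.
have := tr_long qN repK hK i (_ : K <= size (flatten (nseq K x))).
rewrite it; apply.
have sz k : size (flatten (nseq k x)) = k * size x.
  by elim: k => //= k IH; rewrite size_cat IH mulSn.
by rewrite sz; case: (x) hx => // a x' _; rewrite leq_pmulr.
Qed.

Lemma cst_tr (S : finType) n (q : seq S -> 'I_n) rep i x :
  cst q rep i -> tr q rep x i = i.
Proof. by move/pbP. Qed.

Lemma C_irr (S : finType) n (q : seq S -> 'I_n) rep i : i \notin Cset q rep i.
Proof. by rewrite inE eqxx andbF. Qed.

Lemma in_C (S : finType) (L : lang S) n (q : seq S -> 'I_n) rep K :
  (forall x y, q x = q y <-> nerode L x y) -> (forall i, q (rep i) = i) ->
  (forall x, K <= size x -> forall w, L (x ++ w) = L x) ->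
  forall x i, ~~ cst q rep i -> x != [::] -> tr q rep x i \in Cset q rep i.
Proof.
move=> qN repK hK x i hi hx; rewrite inE; apply/andP; split.
  by apply/pbP; exists x.
by apply/eqP => e; move: hi; rewrite (cyc qN repK hK hx e).
Qed.

Lemma C_trans (S : finType) (L : lang S) n (q : seq S -> 'I_n) rep K :
  (forall x y, q x = q y <-> nerode L x y) -> (forall i, q (rep i) = i) ->
  (forall x, K <= size x -> forall w, L (x ++ w) = L x) ->
  forall i j, ~~ cst q rep i -> j \in Cset q rep i -> Cset q rep j \subset Cset q rep i.
Proof.
move=> qN repK hK i j hi; rewrite inE => /andP [/pbP [x [hx ex]] _].
apply/subsetP => k; rewrite inE => /andP [/pbP [y [hy ey]] _].
rewrite -ey -ex -(tr_cat qN repK); apply: (in_C qN repK hK) => //.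
by case: (x) hx.
Qed.

Lemma C_lt (S : finType) (L : lang S) n (q : seq S -> 'I_n) rep K :
  (forall x y, q x = q y <-> nerode L x y) -> (forall i, q (rep i) = i) ->
  (forall x, K <= size x -> forall w, L (x ++ w) = L x) ->
  forall i j, ~~ cst q rep i -> j \in Cset q rep i -> #|Cset q rep j| < #|Cset q rep i|.
Proof.
move=> qN repK hK i j hi hj; apply: proper_card; apply/properP; split.
  exact: (C_trans qN repK hK).
by exists j => //; apply: C_irr.
Qed.

Lemma cst_card (S : finType) (L : lang S) n (q : seq S -> 'I_n) rep :
  (forall x y, q x = q y <-> nerode L x y) -> (forall i, q (rep i) = i) ->
  #|[set i | cst q rep i]| <= 2.
Proof.
move=> qN repK.
have lc i w : cst q rep i -> L (rep i ++ w) = L (rep i).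
  move=> hi; have := cst_tr w hi; rewrite ffunE -{2}(repK i) => /qN /(_ [::]).
  by rewrite !cats0.
have inj : {in [set i | cst q rep i] &, injective (fun i => L (rep i))}.
  move=> i j; rewrite !inE => hi hj e.
  rewrite -(repK i) -(repK j); apply/qN => w; by rewrite lc // lc // e.
rewrite -(card_in_imset inj).
by apply: leq_trans (max_card _) _; rewrite card_bool.
Qed.

Lemma cst_ex (S : finType) (L : lang S) n (q : seq S -> 'I_n) rep K :
  (forall x y, q x = q y <-> nerode L x y) -> (forall i, q (rep i) = i) ->
  (forall x, K <= size x -> forall w, L (x ++ w) = L x) ->
  0 < #|S| -> forall i : 'I_n, exists j, cst q rep j.
Proof.
move=> qN repK hK /card_gt0P [a _] i.
exists (tr q rep (nseq K a) i); apply: (tr_long qN repK hK).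
by rewrite size_nseq.
Qed.

Lemma GP (T : finType) (f : T -> nat) (N : nat) (B : {set T}) :
  (forall B' : {set T}, B' \subset B -> B' != set0 -> exists2 i, i \in B' & f i + #|B'| <= N.+1) ->
  \prod_(i in B) f i <= N ^_ #|B|.
Proof.
have : #|B| = #|B| by [].
move: {2}#|B| => k; elim: k B => [|k IH] B hB H.
  by move/eqP: hB; rewrite cards_eq0 => /eqP ->; rewrite big_set0 cards0.
have B0 : B != set0 by rewrite -card_gt0 hB.
have [i iB fi] := H B (subxx _) B0.
rewrite (bigD1 i iB) /= hB ffactnSr.
have -> : \prod_(j in B | j != i) f j = \prod_(j in B :\ i) f j.
  by apply: eq_bigl => j; rewrite !inE andbC.
rewrite mulnC leq_mul //.
  have e : #|B :\ i| = k by move: hB; rewrite (cardsD1 i) iB => -[].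
  rewrite -e; apply: IH; first by [].
  move=> B' sB' nB'; apply: H => //; apply: subset_trans sB' _; exact: subsetDl.
by move: fi; rewrite hB; lia.
Qed.

Lemma min_C (S : finType) (L : lang S) n (q : seq S -> 'I_n) rep K :
  (forall x y, q x = q y <-> nerode L x y) -> (forall i, q (rep i) = i) ->
  (forall x, K <= size x -> forall w, L (x ++ w) = L x) ->
  forall B' : {set 'I_n}, B' \subset [set i | ~~ cst q rep i] -> B' != set0 ->
  exists2 i, i \in B' & Cset q rep i :&: B' = set0.
Proof.
move=> qN repK hK B' sB /set0Pn [i0 i0B].
case: (arg_minnP (fun i => #|Cset q rep i|) i0B) => i iB imin.
exists i => //.
have iNC : ~~ cst q rep i by have := subsetP sB i iB; rewrite inE.
apply/setP => j; rewrite in_setI in_set0; apply/negP => /andP [jC jB].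
have := C_lt qN repK hK iNC jC; rewrite ltnNge imin //.
Qed.

Lemma min_disj (S : finType) (L : lang S) n (q : seq S -> 'I_n) rep K :
  (forall x y, q x = q y <-> nerode L x y) -> (forall i, q (rep i) = i) ->
  (forall x, K <= size x -> forall w, L (x ++ w) = L x) ->
  forall B' : {set 'I_n}, B' \subset [set i | ~~ cst q rep i] -> B' != set0 ->
  exists2 i, i \in B' & #|Cset q rep i| + #|B'| <= n.
Proof.
move=> qN repK hK B' sB nB; have [i iB dj] := min_C qN repK hK sB nB.
exists i => //.
by rewrite -cardsUI dj cards0 addn0; apply: leq_trans (max_card _) _; rewrite card_ord.
Qed.

Lemma part1_abs (S : finType) (L : lang S) n (q : seq S -> 'I_n) rep K :
  (forall x y, q x = q y <-> nerode L x y) -> (forall i, q (rep i) = i) ->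
  (forall x, K <= size x -> forall w, L (x ++ w) = L x) ->
  0 < #|S| -> 0 < n -> #|Tset q rep| <= (n.-1)`!.
Proof.
move=> qN repK hK S0 n0.
set NC := [set i | ~~ cst q rep i].
pose F := fun i => [pred j | if cst q rep i then j == i else j \in Cset q rep i].
have sub : Tset q rep \subset family F.
  apply/subsetP => t; rewrite inE => /pbP [x [hx <-]].
  apply/familyP => i; rewrite /F inE.
  case hi: (cst q rep i); first by rewrite cst_tr.
  by apply: (in_C qN repK hK); rewrite ?hi.
apply: leq_trans (subset_leq_card sub) _; rewrite card_familyP.
have -> : \prod_i #|F i| = \prod_(i in NC) #|Cset q rep i|.
  rewrite [RHS]big_mkcond; apply: eq_bigr => i _; rewrite /F inE.
  case: (cst q rep i) => /=.
    by rewrite -(card1 i); apply: eq_card => j; rewrite !inE.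
  by apply: eq_card => j; rewrite !inE.
apply: leq_trans (GP (N := n.-1) _) _.
  move=> B' sB nB; have [i iB h] := min_disj qN repK hK sB nB.
  by exists i => //; rewrite prednK.
have [j cj] := cst_ex qN repK hK S0 (Ordinal n0).
have hNC : #|NC| <= n.-1.
  have := cardsC NC; rewrite card_ord.
  have : 0 < #|~: NC| by apply/card_gt0P; exists j; rewrite !inE cj.
  lia.
by rewrite -(ffact_fact hNC) leq_pmulr // fact_gt0.
Qed.

Definition Cp (S : finType) n (q : seq S -> 'I_n) rep (i : 'I_n) : {set 'I_n} :=
  [set k in Cset q rep i | cst q rep k ||
     [exists j in Cset q rep i, ~~ cst q rep j && (k \in Cset q rep j)]].

Definition T2 (S : finType) n (q : seq S -> 'I_n) rep : {set {ffun 'I_n -> 'I_n}} :=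
  [set t | pb (exists x y, x != [::] /\ y != [::] /\ tr q rep (x ++ y) = t)].

Lemma Cp_deep (S : finType) (L : lang S) n (q : seq S -> 'I_n) rep K :
  (forall x y, q x = q y <-> nerode L x y) -> (forall i, q (rep i) = i) ->
  (forall x, K <= size x -> forall w, L (x ++ w) = L x) ->
  forall i k, ~~ cst q rep i -> k \in Cset q rep i -> ~~ cst q rep k ->
  #|Cp q rep i| < #|Cset q rep i|.
Proof.
move=> qN repK hK i k iN kC kN.
have kin : k \in [set j in Cset q rep i | ~~ cst q rep j] by rewrite inE kC kN.
case: (arg_maxnP (fun j => #|Cset q rep j|) kin) => k0 k0in kmax.
have : k0 \in [set j in Cset q rep i | ~~ cst q rep j] := k0in.
rewrite inE => /andP [k0C k0N].
apply: proper_card; apply/properP; split.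
  by apply/subsetP => x; rewrite inE => /andP [].
exists k0 => //; rewrite inE k0C (negbTE k0N) /=.
apply/negP => /existsP [j /and3P [jC jN k0j]].
have := C_lt qN repK hK jN k0j.
rewrite ltnNge; have -> // : #|Cset q rep k0| >= #|Cset q rep j| by apply: kmax; have : j \in [set j in Cset q rep i | ~~ cst q rep j] by rewrite inE jC jN.
Qed.

Lemma Cp_sub (S : finType) n (q : seq S -> 'I_n) rep i : Cp q rep i \subset Cset q rep i.
Proof. by apply/subsetP => x; rewrite inE => /andP []. Qed.

Lemma part3_abs (S : finType) (L : lang S) n (q : seq S -> 'I_n) rep K :
  (forall x y, q x = q y <-> nerode L x y) -> (forall i, q (rep i) = i) ->
  (forall x, K <= size x -> forall w, L (x ++ w) = L x) ->
  0 < #|S| -> 1 < n -> #|T2 q rep| <= 2 * (n.-2)`!.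
Proof.
move=> qN repK hK S0 n1.
set NC := [set i | ~~ cst q rep i].
set CS := [set i | cst q rep i].
have cCS : #|CS| <= 2 by apply: (cst_card qN repK).
have hsum : #|NC| + #|CS| = n.
  rewrite -[RHS](card_ord n) -(cardsC NC); congr (_ + _); apply: eq_card => i.
  by rewrite !inE negbK.
pose F := fun i => [pred j | if cst q rep i then j == i else j \in Cp q rep i].
have sub : T2 q rep \subset family F.
  apply/subsetP => t; rewrite inE => /pbP [x [y [hx [hy <-]]]].
  apply/familyP => i; rewrite /F inE.
  case hi: (cst q rep i); first by rewrite cst_tr.
  rewrite (tr_cat qN repK).
  have jC : tr q rep x i \in Cset q rep i by apply: (in_C qN repK hK); rewrite ?hi.
  rewrite inE.
  case hj: (cst q rep (tr q rep x i)).
    by rewrite (cst_tr _ hj) jC hj.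
  have kC : tr q rep y (tr q rep x i) \in Cset q rep (tr q rep x i).
    by apply: (in_C qN repK hK); rewrite ?hj.
  rewrite (subsetP (C_trans qN repK hK (negbT hi) jC)) //=.
  apply/orP; right; apply/existsP; exists (tr q rep x i); by rewrite jC hj kC.
apply: leq_trans (subset_leq_card sub) _; rewrite card_familyP.
have -> : \prod_i #|F i| = \prod_(i in NC) #|Cp q rep i|.
  rewrite [RHS]big_mkcond; apply: eq_bigr => i _; rewrite /F inE.
  case: (cst q rep i) => /=.
    by rewrite -(card1 i); apply: eq_card => j; rewrite !inE.
  by apply: eq_card => j; rewrite !inE.
have [NC0|nNC] := eqVneq NC set0.
  by rewrite NC0 big_set0 muln_gt0 fact_gt0.
have [i0 i0N dj0] := min_C qN repK hK (subxx _) nNC.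
have i0sub : Cset q rep i0 \subset CS.
  apply/subsetP => j jC; rewrite inE; apply/negPn/negP => jN.
  have : j \in Cset q rep i0 :&: NC by rewrite in_setI jC inE jN.
  by rewrite dj0 inE.
have b0 : #|Cp q rep i0| <= 2.
  apply: leq_trans cCS; apply: subset_leq_card; apply: subset_trans i0sub.
  exact: Cp_sub.
rewrite (bigD1 i0 i0N) /=.
have -> : \prod_(j in NC | j != i0) #|Cp q rep j| = \prod_(j in NC :\ i0) #|Cp q rep j|.
  by apply: eq_bigl => j; rewrite !inE andbC.
apply: leq_mul => //.
have hcard : #|NC :\ i0| = #|NC|.-1 by rewrite (cardsD1 i0 NC) i0N.
apply: leq_trans (GP (N := n.-2) _) _.
  move=> B' sB nB.
  have sB2 : B' \subset NC by apply: subset_trans sB (subsetDl _ _).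
  have [i iB dj] := min_C qN repK hK sB2 nB.
  exists i => //.
  have iN : ~~ cst q rep i by have := subsetP sB2 i iB; rewrite inE.
  have cB : #|Cset q rep i| + #|B'| <= n.
    by rewrite -cardsUI dj cards0 addn0; apply: leq_trans (max_card _) _; rewrite card_ord.
  have B'le : #|B'| <= #|NC :\ i0| by apply: subset_leq_card.
  rewrite hcard in B'le.
  have NCpos : 0 < #|NC| by apply/card_gt0P; exists i0.
  case: (boolP [exists k in Cset q rep i, ~~ cst q rep k]).
    move=> /existsP [k /andP [kC kN]].
    have := Cp_deep qN repK hK iN kC kN; lia.
  rewrite negb_exists => /forallP hall.
  have : #|Cp q rep i| <= #|CS|.
    apply: subset_leq_card; apply: subset_trans (Cp_sub _ _ _) _.
    apply/subsetP => k kC; rewrite inE; have := hall k; rewrite kC /= negbK; done.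
  lia.
rewrite hcard.
have [j cj] := cst_ex qN repK hK S0 i0.
have CSpos : 0 < #|CS| by apply/card_gt0P; exists j; rewrite inE.
have : #|NC|.-1 <= n.-2 by lia.
by move=> h; rewrite -(ffact_fact h) leq_pmulr // fact_gt0.
Qed.

Lemma get_rep (S : finType) n (q : seq S -> 'I_n) :
  (forall i : 'I_n, exists x, q x = i) -> exists rep, forall i, q (rep i) = i.
Proof.
move=> h.
have ex i : exists x, q x == i by have [x e] := h i; exists x; rewrite e.
by exists (fun i => xchoose (ex i)) => i; apply/eqP; exact: (xchooseP (ex i)).
Qed.

Lemma part1 (S : finType) (L : lang S) (n : nat) :
  0 < #|S| -> reverse_definite L -> 1 <= n -> state_complexity L n ->
  exists m, syntactic_complexity L m /\ m <= (n.-1)`!.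
Proof.
move=> S0 RD n1 [q [qN qS]].
have [rep repK] := get_rep qS.
have [K hK] := long_const RD.
exists #|Tset q rep|; split; first exact: G1 qN repK S0.
exact: part1_abs qN repK hK S0 n1.
Qed.

Lemma part3 (S : finType) (L : lang S) (n : nat) :
  0 < #|S| -> reverse_definite L -> 4 <= n -> state_complexity L n ->
  syntactic_complexity L (n.-1)`! ->
  (n.-1)`! - 2 * (n.-2)`! <= #|S|.
Proof.
move=> S0 RD n4 [q [qN qS]] sc.
have [rep repK] := get_rep qS.
have [K hK] := long_const RD.
have sc' := G1 qN repK S0.
have eT : #|Tset q rep| = (n.-1)`!.
  by apply/eqP; rewrite eqn_leq (sc_uniq sc' sc) (sc_uniq sc sc').
have b2 : #|T2 q rep| <= 2 * (n.-2)`!.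
  by apply: (part3_abs qN repK hK S0); lia.
set Ls := [set tr q rep [:: a] | a : S].
have hL : #|Ls| <= #|S| by apply: leq_imset_card.
have sub : Tset q rep \subset Ls :|: T2 q rep.
  apply/subsetP => t; rewrite inE => /pbP [x [hx <-]].
  case: x hx => // a [|b x] _.
    by rewrite in_setU; apply/orP; left; apply/imsetP; exists a.
  rewrite in_setU; apply/orP; right; rewrite inE; apply/pbP.
  by exists [:: a], (b :: x).
have h : (n.-1)`! <= #|S| + 2 * (n.-2)`!.
  rewrite -eT; apply: leq_trans (subset_leq_card sub) _.
  apply: leq_trans (leq_of_leqif (leq_card_setU Ls (T2 q rep))) _.
  exact: leq_add.
by rewrite leq_subLR addnC.
Qed.

Definition words (S : finType) k : seq (seq S) := [seq tval t | t <- enum {: k.-tuple S}].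

Arguments words : clear implicits.

Lemma wordsP (S : finType) k (w : seq S) : (w \in words S k) = (size w == k).
Proof.
apply/mapP/eqP.
  by move=> [t _ ->]; rewrite size_tuple.
by move=> e; exists (Tuple (introT eqP e)); rewrite ?mem_enum.
Qed.

Lemma RDgen (S : finType) (L : lang S) K :
  (forall w, K <= size w -> L w = L (take K w)) -> reverse_definite L.
Proof.
move=> H.
exists [seq w <- flatten [seq words S k | k <- iota 0 K] | L w].
exists [seq w <- words S K | L w] => w.
rewrite mem_filter.
have inE' : (w \in flatten [seq words S k | k <- iota 0 K]) = (size w < K).
  apply/flatten_mapP/idP.
    by move=> [k]; rewrite mem_iota wordsP => /andP [_ hk] /eqP ->.
  by move=> h; exists (size w); rewrite ?mem_iota ?wordsP //.
rewrite inE'; case: ltnP => hw.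
  rewrite andbT; set hh := has _ _.
  have -> : hh = false.
    apply/negP => /hasP [f].
    rewrite mem_filter wordsP => /andP [_ /eqP sf] /size_prefix.
    by rewrite sf leqNgt hw.
  by rewrite orbF.
rewrite andbF /= H //; apply/idP/idP.
  move=> hL; apply/hasP; exists (take K w).
    by rewrite mem_filter wordsP size_takel // eqxx andbT.
  exact: prefix_take.
move=> /hasP [f]; rewrite mem_filter wordsP => /andP [Lf /eqP sf].
by rewrite prefixE sf => /eqP ->.
Qed.

Lemma SCdfa (S : finType) n (delta : 'I_n -> S -> 'I_n) i0 (acc : 'I_n -> bool) :
  (forall i, exists w, foldl delta i0 w = i) ->
  (forall i j, (forall w, acc (foldl delta i w) = acc (foldl delta j w)) -> i = j) ->
  (forall x y, foldl delta i0 x = foldl delta i0 y <->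
     nerode (fun w => acc (foldl delta i0 w)) x y) /\
  state_complexity (fun w => acc (foldl delta i0 w)) n.
Proof.
move=> reach dist.
have qN : forall x y, foldl delta i0 x = foldl delta i0 y <->
     nerode (fun w => acc (foldl delta i0 w)) x y.
  move=> x y; split.
    by move=> e w; rewrite /= !foldl_cat e.
  by move=> h; apply: dist => w; have := h w; rewrite /= !foldl_cat.
by split => //; exists (foldl delta i0).
Qed.

Definition Pset m : {set {ffun 'I_(m.+3) -> 'I_(m.+3)}} :=
  [set t : {ffun 'I_(m.+3) -> 'I_(m.+3)} | [forall i : 'I_(m.+3), if i <= m then i < t i else t i == i]].

Lemma PsetP m (t : {ffun 'I_(m.+3) -> 'I_(m.+3)}) :
  reflect (forall i : 'I_(m.+3), if i <= m then i < t i else t i == i) (t \in Pset m).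
Proof. by rewrite inE; apply: forallP. Qed.

Notation FF m := {ffun 'I_(m.+3) -> 'I_(m.+3)}.
Notation alph m A := {t : {ffun 'I_(m.+3) -> 'I_(m.+3)} | t \in A}.

Definition run m (A : {set {ffun 'I_(m.+3) -> 'I_(m.+3)}}) (i : 'I_(m.+3)) (w : seq (alph m A)) :=
  foldl (fun j (a : alph m A) => val a j) i w.

Lemma P_sink m t (i : 'I_(m.+3)) : t \in Pset m -> m < i -> t i = i.
Proof. by move=> /PsetP /(_ i); rewrite leqNgt => /[swap] ->; move/eqP. Qed.

Lemma P_step m t (i : 'I_(m.+3)) : t \in Pset m -> i <= m -> i < t i.
Proof. by move=> /PsetP /(_ i) /[swap] ->. Qed.

Lemma P_mono m t (i : 'I_(m.+3)) : t \in Pset m -> i <= t i.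
Proof.
move=> tP; case: (leqP i m) => h; first exact: ltnW (P_step tP h).
by rewrite P_sink.
Qed.

Lemma Pcomp m (t1 t2 : {ffun 'I_(m.+3) -> 'I_(m.+3)}) :
  t1 \in Pset m -> t2 \in Pset m -> [ffun i => t2 (t1 i)] \in Pset m.
Proof.
move=> h1 h2; apply/PsetP => i; rewrite ffunE.
case: ifP => hi.
  exact: leq_trans (P_step h1 hi) (P_mono _ h2).
by rewrite !P_sink // ltnNge hi.
Qed.

Lemma run_cat m (A : {set FF m}) i (x y : seq (alph m A)) : run i (x ++ y) = run (run i x) y.
Proof. by rewrite /run foldl_cat. Qed.

Lemma run_P m (A : {set FF m}) : A \subset Pset m -> forall (x : seq (alph m A)), x != [::] ->
  [ffun i => run i x] \in Pset m.
Proof.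
move=> HA; elim/last_ind => // x a IH _.
have aP : val a \in Pset m by apply: (subsetP HA); exact: valP.
case: x IH => [|b x] IH.
  by rewrite (_ : [ffun i => _] = val a) //; apply/ffunP => i; rewrite ffunE.
rewrite (_ : [ffun i => _] = [ffun i => val a ([ffun i => run i (b :: x)] i)]).
  by apply: Pcomp => //; apply: IH.
by apply/ffunP => i; rewrite !ffunE -cats1 run_cat.
Qed.

Lemma run_sinkfix m (A : {set FF m}) : A \subset Pset m -> forall (w : seq (alph m A)) (i : 'I_(m.+3)), m < i -> run i w = i.
Proof.
move=> HA; elim => // a w IH i hi /=.
have aP : val a \in Pset m by apply: (subsetP HA); exact: valP.
by rewrite /run /= (P_sink aP hi) -/(run i w) IH.
Qed.

Lemma run_sink m (A : {set FF m}) : A \subset Pset m -> forall (w : seq (alph m A)) (i : 'I_(m.+3)), m < i + size w -> m < run i w.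
Proof.
move=> HA; elim => [|a w IH] i hi; first by rewrite addn0 in hi.
have aP : val a \in Pset m by apply: (subsetP HA); exact: valP.
rewrite /run /= -/(run _ w); apply: IH.
case: (leqP i m) => h.
  by have := P_step aP h; move: hi => /=; lia.
by rewrite P_sink //; apply: leq_trans (leq_addr _ _).
Qed.

Definition Ldes m (A : {set FF m}) : lang (alph m A) := fun w => run ord0 w == ord_max.

Lemma Ldes_RD m (A : {set FF m}) : A \subset Pset m -> reverse_definite (Ldes (A := A)).
Proof.
move=> HA; apply: (RDgen (K := m.+1)) => w hw.
rewrite /Ldes -{1}(cat_take_drop m.+1 w) run_cat run_sinkfix //.
apply: run_sink => //; rewrite add0n size_takel //.
Qed.

Lemma card_gt N k : k < N -> #|[pred j : 'I_N | k < j]| = N - k.+1.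
Proof.
move=> hk.
rewrite -sum1_card (big_mkcond (fun j : 'I_N => k < j)) /=.
rewrite -(big_mkord xpredT (fun j => if k < j then 1 else 0)).
rewrite (big_cat_nat (n := k.+1)) //= big_nat_cond big1; last first.
  by move=> i /andP [/andP [_ h] _]; rewrite ltnNge -ltnS h.
rewrite add0n big_nat_cond (eq_bigr (fun _ => 1)); last first.
  by move=> i /andP [/andP [h _] _]; rewrite h.
by rewrite -big_nat_cond sum_nat_const_nat muln1.
Qed.

Lemma card_P m : #|Pset m| = (m.+2)`!.
Proof.
pose F := fun i : 'I_(m.+3) => [pred j : 'I_(m.+3) | if i <= m then i < j else j == i].
have -> : #|Pset m| = #|family F|.
  apply: eq_card => t; apply/PsetP/familyP => h i; have := h i; by rewrite /F inE.
rewrite card_familyP.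
rewrite (eq_bigr (fun i : 'I_(m.+3) => if i <= m then m.+2 - i else 1)); last first.
  move=> i _; rewrite /F; case: ifP => hi.
    rewrite (eq_card (B := [pred j : 'I_(m.+3) | i < j])); last first.
      by [].
    rewrite card_gt; lia.
  by rewrite -(card1 i); apply: eq_card => j; rewrite !inE.
have h1 : (m.+2 <= m) = false by lia.
have h2 : (m.+1 <= m) = false by lia.
rewrite big_ord_recr big_ord_recr /= h1 h2 !muln1.
rewrite (eq_bigr (fun i : 'I_(m.+1) => m.+2 - i)); last first.
  by move=> i _; rewrite -ltnS ltn_ord.
rewrite -ffact_prod -(ffact_fact (leqnSn m.+1)) subSnn.
by rewrite muln1.
Qed.

Lemma inordv m k : k < m.+3 -> val (inord k : 'I_(m.+3)) = k.
Proof. by move=> h; rewrite /= inordK. Qed.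

Lemma design m (A : {set FF m}) : A \subset Pset m ->
  (forall p, p \in Pset m -> exists w : seq (alph m A), w != [::] /\ forall i, run i w = p i) ->
  reverse_definite (Ldes (A := A)) /\ state_complexity (Ldes (A := A)) m.+3 /\
  syntactic_complexity (Ldes (A := A)) (m.+2)`!.
Proof.
move=> HA Hgen.
have reach : forall i : 'I_(m.+3), exists w : seq (alph m A), run ord0 w = i.
  move=> i; case: (posnP i) => hi.
    by exists [::]; apply/val_inj; rewrite /= hi.
  pose p := [ffun j : 'I_(m.+3) => if j <= m then (if j < i then i else ord_max) else j].
  have pP : p \in Pset m.
    apply/PsetP => j; rewrite ffunE; case: (leqP j m) => hj //.
    by case: (ltnP j i) => h /=; lia.
  have [w [_ hw]] := Hgen p pP.
  by exists w; rewrite hw ffunE /= hi.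
pose om1 : 'I_(m.+3) := inord m.+1.
have om1v : val om1 = m.+1 by rewrite inordv.
have dist1 : forall i j : 'I_(m.+3), i <= m ->
    (forall w : seq (alph m A), (run i w == ord_max) = (run j w == ord_max)) -> i = j.
  move=> i j hi H.
  pose p1 := [ffun k : 'I_(m.+3) => if k <= m then (if k == i then ord_max else om1) else k].
  have p1P : p1 \in Pset m.
    apply/PsetP => k; rewrite ffunE; case: (leqP k m) => hk //.
    by case: (k == i) => /=; rewrite ?om1v; lia.
  have [w1 [_ hw1]] := Hgen p1 p1P.
  have := H w1; rewrite !hw1 !ffunE hi eqxx.
  case: (leqP j m) => hj.
    case: (eqVneq j i) => [->//|ne].
    rewrite eqxx => /esym/eqP e; have := congr1 val e; rewrite om1v /=; lia.
  rewrite eqxx => /esym/eqP ej; exfalso.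
  pose p2 := [ffun k : 'I_(m.+3) => if k <= m then om1 else k].
  have p2P : p2 \in Pset m.
    by apply/PsetP => k; rewrite ffunE; case: (leqP k m) => hk //; rewrite om1v; lia.
  have [w2 [_ hw2]] := Hgen p2 p2P.
  have := H w2; rewrite !hw2 !ffunE hi ej.
  rewrite leqNgt (_ : m < m.+2) //= eqxx => /eqP e.
  by have := congr1 val e; rewrite om1v /=; lia.
have dist : forall i j : 'I_(m.+3),
    (forall w : seq (alph m A), (run i w == ord_max) = (run j w == ord_max)) -> i = j.
  move=> i j H.
  case: (leqP i m) => hi; first exact: dist1.
  case: (leqP j m) => hj; first by symmetry; apply: dist1 => // w; rewrite H.
  have := H [::]; rewrite /run /= -!(inj_eq val_inj) /=.
  have := ltn_ord i; have := ltn_ord j => hj' hi' e.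
  have f1 : (m.+1 == m.+2) = false by lia.
  apply: ord_inj; move: e.
  have hi3 : (i : nat) = m.+1 \/ (i : nat) = m.+2 by lia.
  have hj3 : (j : nat) = m.+1 \/ (j : nat) = m.+2 by lia.
  by case: hi3 => ->; case: hj3 => ->; rewrite ?f1 ?eqxx.
have [qN sc] := SCdfa (delta := fun j (a : alph m A) => val a j) (acc := fun j => j == ord_max) reach dist.
split; first exact: Ldes_RD.
split; first exact: sc.
have [rep repK] := get_rep reach.
pose pmax := [ffun i : 'I_(m.+3) => if i <= m then ord_max else i].
have pmaxP : pmax \in Pset m.
  by apply/PsetP => i; rewrite ffunE; case: (leqP i m) => h //=; lia.
have S0 : 0 < #|{: alph m A}|.
  have [w [hw _]] := Hgen _ pmaxP.
  by case: w hw => // a w _; apply/card_gt0P; exists a.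
have trE' : forall x i, tr (foldl (fun j (a : alph m A) => val a j) ord0) rep x i = run i x.
  move=> x i; rewrite ffunE foldl_cat.
  by rewrite -[foldl _ ord0 (rep i)]/(run ord0 (rep i)) repK.
have eT : Tset (foldl (fun j (a : alph m A) => val a j) ord0) rep = Pset m.
  apply/setP => t; rewrite inE; apply/pbP/idP.
    move=> [x [hx <-]]; rewrite (_ : tr _ _ _ = [ffun i => run i x]).
      exact: run_P.
    by apply/ffunP => i; rewrite [RHS]ffunE trE'.
  move=> tP; have [w [hw ew]] := Hgen t tP; exists w; split => //.
  by apply/ffunP => i; rewrite trE' ew.
rewrite -card_P -eT.
exact: (G1 qN repK S0).
Qed.

Definition Qset k : {set FF k} :=
  [set t in Pset k | [forall i : 'I_(k.+3), (i < k) ==> (t i != i.+1 :> nat)]].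

Lemma card_Q k : #|Qset k| = 2 * (k.+1)`!.
Proof.
pose F := fun i : 'I_(k.+3) =>
  [pred j : 'I_(k.+3) | if i < k then i.+1 < j else if i <= k then i < j else j == i].
have -> : #|Qset k| = #|family F|.
  apply: eq_card => t; rewrite inE; apply/andP/familyP.
    move=> [/PsetP h1 /forallP h2] i; have := h1 i; have := h2 i; rewrite /F inE.
    have [hik|hik] := ltnP i k.
      rewrite (ltnW hik) /= => ne lt; lia.
    by [].
  move=> h; split.
    apply/PsetP => i; have := h i; rewrite /F inE.
    have [hik|hik] := ltnP i k.
      rewrite (ltnW hik) /= => lt; lia.
    by [].
  apply/forallP => i; have := h i; rewrite /F inE.
  have [hik|hik] := ltnP i k.
    rewrite /= => lt; lia.
  by [].
rewrite card_familyP.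
rewrite (eq_bigr (fun i : 'I_(k.+3) => if i < k then k.+1 - i else if i <= k then k.+2 - i else 1)); last first.
  move=> i _; rewrite /F; case: (ltnP i k) => hi.
    rewrite (eq_card (B := [pred j : 'I_(k.+3) | i.+1 < j])) //.
    rewrite card_gt; lia.
  case: (leqP i k) => hi2.
    rewrite (eq_card (B := [pred j : 'I_(k.+3) | i < j])) //.
    rewrite card_gt; lia.
  by rewrite -(card1 i); apply: eq_card => j; rewrite !inE.
have h1 : (k.+2 < k) = false by lia.
have h2 : (k.+2 <= k) = false by lia.
have h3 : (k.+1 < k) = false by lia.
have h4 : (k.+1 <= k) = false by lia.
rewrite big_ord_recr big_ord_recr big_ord_recr /= ?h1 ?h2 ?h3 ?h4 ?ltnn ?leqnn ?muln1.
rewrite (eq_bigr (fun i : 'I_k => k.+1 - i)); last first.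
  by move=> i _; rewrite ltn_ord.
rewrite -ffact_prod -(ffact_fact (leqnSn k)) subSnn.
have -> : k.+2 - k = 2 by lia.
by rewrite muln1 mulnC.
Qed.

Lemma Q_sub k : Qset k \subset Pset k.
Proof. by apply/subsetP => t; rewrite inE => /andP []. Qed.

Lemma genA k : 0 < k -> forall p, p \in Pset k ->
  exists w : seq (alph k (Pset k :\: Qset k)), w != [::] /\ forall i, run i w = p i.
Proof.
move=> k0 p pP.
case: (boolP (p \in Qset k)) => pQ; last first.
  have pA : p \in Pset k :\: Qset k by rewrite inE pQ pP.
  by exists [:: exist _ p pA].
have pQ' : forall i : 'I_(k.+3), i < k -> i.+1 < p i.
  move: pQ; rewrite inE => /andP [_ /forallP h] i hi.
  have := h i; rewrite hi /= => ne.
  by rewrite ltn_neqAle eq_sym ne /= (P_step pP (ltnW hi)).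
pose t1 := [ffun i : 'I_(k.+3) => if i < k then inord i.+1 else p i].
pose t2 := [ffun j : 'I_(k.+3) => if j == ord0 then inord 1
                                  else if j <= k then p (inord j.-1) else j].
have v1 : forall i : 'I_(k.+3), i < k -> val (t1 i) = i.+1.
  by move=> i hi; rewrite ffunE hi /= inordK //; lia.
have t1P : t1 \in Pset k.
  apply/PsetP => i; case: (leqP i k) => hi.
    case: (ltnP i k) => hi2; first by rewrite v1.
    by rewrite ffunE (ltnNge i k) hi2 /= (P_step pP hi).
  by rewrite ffunE (ltnNge i k) (ltnW hi) /= (P_sink pP hi).
have t1A : t1 \in Pset k :\: Qset k.
  rewrite inE t1P andbT inE t1P /= negb_forall; apply/existsP; exists ord0.
  by rewrite k0 /= v1 // eqxx.
have t2P : t2 \in Pset k.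
  apply/PsetP => j; rewrite ffunE; case: (leqP j k) => hj.
    case: eqP => [->|ne]; first by rewrite /= inordK.
    have j0 : 0 < j by case: (posnP j) => // h; case: ne; apply: val_inj; rewrite /= h.
    have := pQ' (inord j.-1); rewrite inordK; last by lia.
    move=> h; have := h (_ : j.-1 < k); lia.
  have jn0 : (j == ord0) = false by apply/eqP => e; move: hj; rewrite e.
  by rewrite jn0.
have t2A : t2 \in Pset k :\: Qset k.
  rewrite inE t2P andbT inE t2P /= negb_forall; apply/existsP; exists ord0.
  by rewrite k0 /= ffunE eqxx inordK.
exists [:: exist _ t1 t1A; exist _ t2 t2A]; split => // i.
rewrite /run /= [t2 _]ffunE.
case: (ltnP i k) => hi.
  have ne : (t1 i == ord0) = false.
    by apply/negbTE; rewrite -(inj_eq val_inj) v1.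
  rewrite ne (_ : t1 i <= k); last by rewrite v1.
  congr (p _); apply: val_inj; rewrite /= inordK v1 //; lia.
have h1 : t1 i = p i by rewrite ffunE ltnNge hi.
have hp : k < p i.
  case: (leqP i k) => hi2.
    have := P_step pP hi2; lia.
  by rewrite P_sink.
rewrite h1; have -> : (p i == ord0) = false by apply/eqP => e; move: hp; rewrite e.
by rewrite leqNgt hp.
Qed.

Lemma part2 : forall n : nat, 1 <= n ->
      exists (S : finType) (L : lang S),
        0 < #|S| /\ reverse_definite L /\ state_complexity L n /\
        syntactic_complexity L (n.-1)`!.
Proof.
case => // [[|[|m]]] _.
- exists unit, (fun _ => false); split; first by rewrite card_unit.
  split; first by apply: (RDgen (K := 0)).
  split.
    exists (fun _ => ord0); split; first by split.
    by move=> i; exists [::]; apply: val_inj; case: i => [[]].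
  exists (fun _ => ord0); split; first by move=> x y _ _; split.
  by move=> i; exists [:: tt]; split => //; apply: val_inj; case: i => [[]].
- exists unit, (fun w => w == [::]); split; first by rewrite card_unit.
  split.
    apply: (RDgen (K := 1)) => w; by case: w.
  split.
    exists (fun w : seq unit => if w is [::] then (ord0 : 'I_2) else ord_max); split.
      move=> x y; split.
        case: x => [|a x]; case: y => [|b y].
        + by [].
        + by move=> e; have := congr1 val e.
        + by move=> e; have := congr1 val e.
        + by [].
      move/(_ [::]); rewrite !cats0.
      by case: x => [|a x]; case: y => [|b y].
    move=> i; case: i => [[|[|i]]] hi.
      by exists [::]; apply: val_inj.
      by exists [:: tt]; apply: val_inj.
    by [].
  exists (fun _ => ord0); split.
    move=> x y hx hy; split => // _ u v.
    by case: x hx => // a x _; case: y hy => // b y _; case: u.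
  by move=> i; exists [:: tt]; split => //; apply: val_inj; case: i => [[]].
- exists {: alph m (Pset m)}, (Ldes (A := Pset m)).
  split.
    by rewrite card_sig; rewrite (eq_card (B := Pset m)) // card_P fact_gt0.
  apply: design => // p pP.
  by exists [:: exist _ p pP].
Qed.

Lemma part4 : forall n : nat, 4 <= n ->
      exists (S : finType) (L : lang S),
        #|S| = (n.-1)`! - 2 * (n.-2)`! /\ reverse_definite L /\
        state_complexity L n /\ syntactic_complexity L (n.-1)`!.
Proof.
case=> [|[|[|[|m]]]] // _.
exists {: alph m.+1 (Pset m.+1 :\: Qset m.+1)}, (Ldes (A := Pset m.+1 :\: Qset m.+1)).
split.
  rewrite card_sig (eq_card (B := Pset m.+1 :\: Qset m.+1)) //.
  rewrite cardsD (setIidPr (Q_sub _)) card_P card_Q //.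
apply: design; first exact: subsetDl.
exact: genA.
Qed.

Theorem theorem3 :
  (* upper bound *)
  (forall (S : finType) (L : lang S) (n : nat),
      0 < #|S| -> reverse_definite L -> 1 <= n -> state_complexity L n ->
      exists m, syntactic_complexity L m /\ m <= (n.-1)`!) /\
  (* tightness *)
  (forall n : nat, 1 <= n ->
      exists (S : finType) (L : lang S),
        0 < #|S| /\ reverse_definite L /\ state_complexity L n /\
        syntactic_complexity L (n.-1)`!) /\
  (* alphabet lower bound for maximal languages *)
  (forall (S : finType) (L : lang S) (n : nat),
      0 < #|S| -> reverse_definite L -> 4 <= n -> state_complexity L n ->
      syntactic_complexity L (n.-1)`! ->
      (n.-1)`! - 2 * (n.-2)`! <= #|S|) /\
  (* tightness of the alphabet bound *)
  (forall n : nat, 4 <= n ->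
      exists (S : finType) (L : lang S),
        #|S| = (n.-1)`! - 2 * (n.-2)`! /\ reverse_definite L /\
        state_complexity L n /\ syntactic_complexity L (n.-1)`!).
Proof.
split; first exact: part1.
split; first exact: part2.
split; first exact: part3.
exact: part4.
Qed.
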